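(* For $m\ge1$ and $n\ge2$, \[ G_{m,n}=\frac{2(-1)^{n-1}}{n!}\int_0^1\binom{t}{m}\left[{n\atop 2}\right]_{t-1}dt . \]
   Context: The generalized Gregory coefficients $G_{m,n}$ are defined by $\sum_{m,n\ge0}G_{m,n}x^my^n=\dfrac{y\log^2(1+x)-x\log^2(1+y)}{\log(1+x)-\log(1+y)}$ (formal power series; $\log^ku=(\log u)^k$). $\binom{t}{m}=t(t-1)\cdots(t-m+1)/m!$. The Stirling polynomials of the first kind $\left[{n\atop m}\right]_x\in\mathbb Z[x]$ ($n\ge m\ge0$) are defined by $\sum_{m=0}^n\left[{n\atop m}\right]_x y^m=(x+y)(x+y+1)\cdots(x+y+n-1)$; equivalently $(1-t)^{-x}\frac{(-1)^m}{m!}\log^m(1-t)=\sum_{n\ge m}\left[{n\atop m}\right]_x\frac{t^n}{n!}$. *)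

(* Defs.v *)
From HB Require Import structures.
From mathcomp Require Import all_boot all_order all_algebra.
From mathcomp Require Import all_classical all_reals all_analysis.
Set Implicit Arguments. Unset Strict Implicit. Unset Printing Implicit Defensive.
Import Order.TTheory GRing.Theory Num.Theory.
Import numFieldNormedType.Exports.
Local Open Scope ring_scope.

Section Defs.
Variable R : realType.

(* Coefficients of log(1+x) = sum_{k>=1} (-1)^(k+1) x^k / k  (l 0 = 0). *)
Definition logc (k : nat) : R :=
  if k is 0 then 0 else (-1) ^+ k.+1 / k%:R.

(* Coefficients of log^2(1+x) (Cauchy square). *)
Definition log2c (k : nat) : R :=
  \sum_(i < k.+1) logc i * logc (k - i).

(* Bivariate formal power series are functions nat -> nat -> R
   (F a b = coefficient of x^a y^b). *)

(* Denominator  log(1+x) - log(1+y). *)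
Definition denomc (a b : nat) : R :=
  (if b == 0%N then logc a else 0) - (if a == 0%N then logc b else 0).

(* Numerator  y log^2(1+x) - x log^2(1+y). *)
Definition numerc (a b : nat) : R :=
  (if b == 1%N then log2c a else 0) - (if a == 1%N then log2c b else 0).

Definition bimul (F H : nat -> nat -> R) (a b : nat) : R :=
  \sum_(i < a.+1) \sum_(j < b.+1) F i j * H (a - i)%N (b - j)%N.

(* G is the (generalized Gregory) coefficient array of the quotient
   (y log^2(1+x) - x log^2(1+y)) / (log(1+x) - log(1+y)),
   i.e. G * denominator = numerator as formal power series. *)
Definition is_gregory (G : nat -> nat -> R) : Prop :=
  forall a b, bimul G denomc a b = numerc a b.

Definition gbinom (t : R) (m : nat) : R :=
  (\prod_(i < m) (t - i%:R)) / m`!%:R.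

Definition stirling1p (n m : nat) (x : R) : R :=
  (\prod_(k < n) ('X + (x + k%:R)%:P))`_m.

End Defs.

(* Main.v *)
Require Import Defs.
From HB Require Import structures.
From mathcomp Require Import all_boot all_order all_algebra.
From mathcomp Require Import all_classical all_reals all_analysis.
From mathcomp Require Import ring.
Import Order.TTheory GRing.Theory Num.Theory.
Import numFieldNormedType.Exports.
Local Open Scope classical_set_scope.
Local Open Scope ring_scope.
Set Implicit Arguments. Unset Strict Implicit. Unset Printing Implicit Defensive.

Section Alg.
Variable R : realType.
Local Notation logc := (@logc R).
Local Notation log2c := (@log2c R).
Local Notation denomc := (@denomc R).
Local Notation numerc := (@numerc R).
Let mu := @lebesgue_measure R.

Definition Iq (p : {poly R}) : R := \int[mu]_(t in `[0%R, 1%R]) p.[t].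

Lemma Iq_integrable (p : {poly R}) : mu.-integrable `[0%R, 1%R] (EFin \o horner p).
Proof.
apply: continuous_compact_integrable; first exact: segment_compact.
by apply: continuous_in_subspaceT => x _; exact: continuous_horner.
Qed.

Lemma IqD p q : Iq (p + q) = Iq p + Iq q.
Proof.
rewrite /Iq -RintegralD//; last 2 first.
- exact: Iq_integrable.
- exact: Iq_integrable.
by apply: eq_Rintegral => x _; rewrite hornerD.
Qed.

Lemma IqZ c p : Iq (c *: p) = c * Iq p.
Proof.
rewrite /Iq -RintegralZl//; last exact: Iq_integrable.
by apply: eq_Rintegral => x _; rewrite hornerZ.
Qed.

Lemma Iq0 : Iq 0 = 0.
Proof. by rewrite -(scale0r 0) IqZ mul0r. Qed.

Lemma Iq_sum (I : Type) (r : seq I) (P : pred I) (F : I -> {poly R}) :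
  Iq (\sum_(i <- r | P i) F i) = \sum_(i <- r | P i) Iq (F i).
Proof.
by apply: big_morph; [exact: IqD | exact: Iq0].
Qed.

Lemma Iq_deriv p : Iq p^`() = p.[1] - p.[0].
Proof.
rewrite /Iq /Rintegral (@continuous_FTC2 _ _ (horner p))//.
- by apply: continuous_in_subspaceT => x _; exact: continuous_horner.
- split.
  + by move=> x _; exact: derivable_horner.
  + by apply: cvg_at_right_filter; exact: continuous_horner.
  + by apply: cvg_at_left_filter; exact: continuous_horner.
- by move=> x _; rewrite -derivE.
Qed.
Definition conv (f g : nat -> {poly R}) (n : nat) : {poly R} :=
  \sum_(i < n.+1) f i * g (n - i)%N.

Lemma conv_comm f g n : conv f g n = conv g f n.
Proof.
rewrite /conv (reindex_inj rev_ord_inj) /=; apply: eq_bigr => i _.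
by rewrite subSS subKn 1?mulrC // -ltnS.
Qed.

Definition trunc (n : nat) (f : nat -> {poly R}) : {poly {poly R}} :=
  \poly_(i < n.+1) f i.

Lemma convE f g n k : (k <= n)%N -> conv f g k = (trunc n f * trunc n g)`_k.
Proof.
move=> kn; rewrite coefM /conv; apply: eq_bigr => i _.
rewrite !coef_poly !ifT //; first by apply: (leq_ltn_trans (leq_subr _ _)).
by apply: (leq_ltn_trans _ (kn : k < n.+1)%N); rewrite -ltnS.
Qed.

Lemma coefM_trunc (p q r : {poly {poly R}}) n :
  (forall k, (k <= n)%N -> p`_k = q`_k) -> (p * r)`_n = (q * r)`_n.
Proof.
move=> pq; rewrite !coefM; apply: eq_bigr => i _.
by rewrite pq // -ltnS.
Qed.

Lemma conv_assoc f g h n : conv (conv f g) h n = conv f (conv g h) n.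
Proof.
rewrite (convE _ _ (leqnn n)).
rewrite (@coefM_trunc _ (trunc n f * trunc n g)); last first.
  by move=> k kn; rewrite coef_poly ltnS kn (convE _ _ kn).
rewrite -mulrA conv_comm (convE _ _ (leqnn n)) mulrC.
apply: coefM_trunc => k kn.
by rewrite coef_poly ltnS kn (convE _ _ kn) mulrC.
Qed.


Definition lc (k : nat) : {poly R} := (logc k)%:P.
Definition L2c (k : nat) : {poly R} := (log2c k)%:P.
Definition A (a : nat) : {poly R} := (a`!%:R)^-1 *: \prod_(i < a) ('X - (i%:R)%:P).
Definition cc (k : nat) : R := k%:R * logc k.

Lemma nat1_neq0 (k : nat) : (k.+1%:R : R) != 0.
Proof. by rewrite pnatr_eq0. Qed.

Lemma A0 : A 0 = 1.
Proof. by rewrite /A big_ord0 fact0 invr1 scale1r. Qed.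

Lemma AS a : A a.+1 = (a.+1%:R)^-1 *: (A a * ('X - (a%:R)%:P)).
Proof.
by rewrite /A big_ord_recr /= factS natrM invfM -scalerAl scalerA.
Qed.

Lemma AX i : A i * ('X - (i%:R)%:P) = (i.+1)%:R *: A i.+1.
Proof. by rewrite AS scalerA mulfV ?nat1_neq0 // scale1r. Qed.

Lemma AXa i a : (i <= a)%N ->
  A i * ('X - (a%:R)%:P) = (i.+1)%:R *: A i.+1 - (a - i)%N%:R *: A i.
Proof.
move=> ia.
have -> : 'X - (a%:R)%:P = ('X - (i%:R)%:P) - ((a - i)%N%:R)%:P :> {poly R}.
  by rewrite natrB // polyCB opprB addrA subrK.
by rewrite mulrBr AX mulrC mul_polyC.
Qed.

Lemma cc0 : cc 0 = 0.
Proof. by rewrite /cc mul0r. Qed.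

Lemma ccS k : cc k.+1 = (-1) ^+ k.
Proof.
rewrite /cc /= mulrCA mulfV ?nat1_neq0 // mulr1.
by rewrite !exprS !mulNr !mul1r opprK.
Qed.

Lemma ccSS k : cc k.+1 + cc k.+2 = 0.
Proof. by rewrite !ccS exprS mulN1r subrr. Qed.

Lemma convAl a : conv A lc a = \sum_(i < a.+1) logc (a - i) *: A i.
Proof. by apply: eq_bigr => i _; rewrite mulrC mul_polyC. Qed.

Lemma KeyA a : cc a.+1 *: A 0 + \sum_(i < a.+1) cc (a - i) *: A i.+1
  + \sum_(i < a.+1) cc (a - i) *: A i = A a.
Proof.
have -> : cc a.+1 *: A 0 + \sum_(i < a.+1) cc (a - i) *: A i.+1
   = \sum_(i < a.+2) cc (a.+1 - i) *: A i.
  by rewrite [RHS]big_ord_recl subn0.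
rewrite [X in X + _]big_ord_recr /= subnn cc0 scale0r addr0 -big_split /=.
rewrite big_ord_recr /= subSn // subnn cc0 ccS expr0 scale0r addr0 scale1r.
rewrite big1 ?add0r // => i _.
have ia : (i < a)%N by [].
by rewrite -scalerDl (subSn (ltnW ia)) -(subnSK ia) addrC ccSS scale0r.
Qed.

Lemma sumAX a : (\sum_(i < a.+1) logc (a - i) *: A i) * ('X - (a%:R)%:P) =
  \sum_(i < a.+1) (logc (a - i) * i.+1%:R) *: A i.+1
  - \sum_(i < a.+1) cc (a - i) *: A i.
Proof.
rewrite big_distrl /= -sumrB; apply: eq_bigr => i _.
rewrite -scalerAl (AXa (ltn_ord i : (i <= a)%N)) scalerBr !scalerA.
by rewrite /cc (mulrC ((a - i)%:R : R)).
Qed.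

Lemma deriv_A a : (A a)^`() = conv A lc a.
Proof.
elim: a => [|a IH].
  by rewrite A0 /conv big_ord1 /lc /= polyC0 mulr0 -polyC1 derivC.
rewrite AS derivZ derivM derivXsubC mulr1 IH.
suff H : a.+1%:R *: conv A lc a.+1 = conv A lc a * ('X - (a%:R)%:P) + A a.
  by rewrite -H scalerA mulVf ?nat1_neq0 // scale1r.
rewrite !convAl sumAX -[in RHS](KeyA a).
rewrite big_ord_recl scalerDr subn0 scalerA scaler_sumr.
under eq_bigr => i _ do rewrite scalerA lift0 subSS.
have -> : \sum_(i < a.+1) (a.+1%:R * logc (a - i)) *: A i.+1 =
   \sum_(i < a.+1) (logc (a - i) * i.+1%:R) *: A i.+1
   + \sum_(i < a.+1) cc (a - i) *: A i.+1.
  rewrite -big_split /=; apply: eq_bigr => i _; rewrite -scalerDl /cc.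
  congr (_ *: _); rewrite (mulrC (logc _)) -mulrDl -natrD addSn (subnKC (ltn_ord i : (i <= a)%N)) //.

rewrite /cc; ring.
Qed.


Lemma eq_conv f g f' g' n : (forall k, f k = f' k) -> (forall k, g k = g' k) ->
  conv f g n = conv f' g' n.
Proof. by move=> ff gg; apply: eq_bigr => i _; rewrite ff gg. Qed.

Lemma deriv_convC (c : nat -> R) f n :
  (conv (fun k => (c k)%:P) f n)^`() = conv (fun k => (c k)%:P) (fun k => (f k)^`()) n.
Proof.
rewrite /conv raddf_sum; apply: eq_bigr => i _.
exact: deriv_mulC.
Qed.

Lemma comp_convC (c : nat -> R) f n q :
  (conv (fun k => (c k)%:P) f n) \Po q = conv (fun k => (c k)%:P) (fun k => f k \Po q) n.
Proof.
rewrite /conv; elim/big_rec2: _ => [|i x y _ <-]; first exact: comp_poly0.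
by rewrite comp_polyD comp_polyM comp_polyC.
Qed.

Lemma conv_lc_lc n : conv lc lc n = L2c n.
Proof. by rewrite /L2c /log2c rmorph_sum; apply: eq_bigr => i _; rewrite rmorphM. Qed.

Lemma conv_lc_A n : conv lc A n = (A n)^`().
Proof. by rewrite conv_comm deriv_A. Qed.

Lemma deriv_conv_L2 n :
  (conv L2c A n)^`() = conv lc (conv L2c A) n.
Proof.
rewrite deriv_convC (@eq_conv _ _ L2c (conv lc A)) //; last first.
  by move=> k; rewrite conv_lc_A.
rewrite -conv_assoc (@eq_conv _ _ (conv lc L2c) A) ?conv_assoc // => k.
by rewrite conv_comm.
Qed.

Lemma deriv2_A n : (A n)^`()^`() = conv L2c A n.
Proof.
rewrite -conv_lc_A /lc deriv_convC (@eq_conv _ _ lc (conv lc A)) //; last first.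
  by move=> k; rewrite conv_lc_A.
rewrite -conv_assoc; apply: eq_conv => // k.
by rewrite conv_lc_lc.
Qed.

Definition B (b : nat) : {poly R} := (conv L2c A b) \Po (1 - 'X).

Lemma deriv_B b : (B b)^`() = - conv lc B b.
Proof.
rewrite /B deriv_comp deriv_conv_L2 derivB derivX -polyC1 derivC sub0r mulrN1.
by rewrite /lc comp_convC.
Qed.

Lemma hornerA a x : (A a).[x] = (a`!%:R)^-1 * \prod_(i < a) (x - i%:R).
Proof.
rewrite /A hornerZ horner_prod; congr (_ * _); apply: eq_bigr => i _.
by rewrite hornerXsubC.
Qed.

Lemma A_at0 a : (A a).[0] = (a == 0)%:R.
Proof.
rewrite hornerA; case: a => [|a]; first by rewrite big_ord0 fact0 invr1 mulr1.
by rewrite big_ord_recl /= subrr mul0r mulr0.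
Qed.

Lemma A_at1 a : (A a).[1] = (a <= 1)%N%:R.
Proof.
rewrite hornerA; case: a => [|[|a]].
- by rewrite big_ord0 fact0 invr1 mulr1.
- by rewrite big_ord1 /= subr0 factS fact0 muln1 invr1 mulr1.
- by rewrite big_ord_recl big_ord_recl /= subrr mul0r mulr0 mulr0.
Qed.

Lemma B_at1 b : (B b).[1] = log2c b.
Proof.
rewrite /B horner_comp !hornerE subrr /conv horner_sum big_ord_recr /= subnn.
rewrite hornerM A_at0 /= mulr1 hornerC big1 ?add0r // => i _.
rewrite hornerM A_at0 subn_eq0 leqNgt ltn_ord /= mulr0 //.
Qed.

Lemma B_at0 b : (B b).[0] = log2c b + log2c b.-1.
Proof.
rewrite /B horner_comp !hornerE subr0 /conv horner_sum.
case: b => [|b].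
  by rewrite big_ord1 hornerM hornerC A_at1 mulr1 /log2c big_ord1 /logc mul0r add0r.
rewrite big_ord_recr /= subnn hornerM A_at1 mulr1 hornerC addrC; congr (_ + _).
rewrite big_ord_recr /= subSn // subnn hornerM A_at1 mulr1 hornerC /=.
rewrite big1 ?add0r // => i _.
by rewrite hornerM A_at1 /= subSn ?(ltnW (ltn_ord i)) // -subnSK // mulr0.
Qed.


Definition Rn (n : nat) : {poly R} := \prod_(k < n) ('X + (k%:R)%:P).

Lemma stir_comp n x :
  \prod_(k < n) ('X + (x + k%:R)%:P) = Rn n \Po ('X + x%:P).
Proof.
rewrite /Rn; elim/big_rec2: _ => [|i y p _ ->]; first by rewrite -polyC1 comp_polyC.
by rewrite comp_polyM comp_polyD comp_polyX comp_polyC polyCD addrA.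
Qed.

Lemma taylor2 (p : {poly R}) x : (p \Po ('X + x%:P))`_2 = (p^`N(2)).[x].
Proof.
rewrite /comp_poly addrC.
have sz : (size (p^:P) <= (size p).+3)%N by rewrite size_map_polyC leqW // leqW.
rewrite (nderiv_taylor_wide (mulrC _ _) sz) coef_sum.
rewrite (bigD1 (Ordinal (isT : (2 < (size p).+3)%N))) //=.
rewrite nderivn_map horner_map coefMXn ltnn subnn coefC /= big1 ?addr0 // => i ni.
rewrite coefMXn; case: ltnP => // i2.
have i2' : (i < 2)%N.
  rewrite ltn_neqAle i2 andbT; apply: contra ni => /eqP e.
  by apply/eqP/val_inj.
by rewrite nderivn_map horner_map coefC subn_eq0 leqNgt i2'.
Qed.

Lemma prodN n : \prod_(i < n) (- 'X - (i%:R)%:P) = (-1) ^+ n *: Rn n.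
Proof.
rewrite /Rn; elim: n => [|n IH]; first by rewrite !big_ord0 expr0 scale1r.
rewrite !big_ord_recr /= IH -scalerAl -opprD mulrN exprS mulN1r scaleNr scalerN.
done.
Qed.

Lemma sign2 n : (-1) ^+ n * (-1) ^+ n = 1 :> R.
Proof. by rewrite -exprMn mulrNN mulr1 expr1n. Qed.

Lemma Rn_A n : Rn n = ((-1) ^+ n * n`!%:R) *: (A n \Po (- 'X)).
Proof.
have -> : A n \Po (- 'X) = (n`!%:R)^-1 *: \prod_(i < n) (- 'X - (i%:R)%:P).
  rewrite /A comp_polyZ; congr (_ *: _).
  elim/big_rec2: _ => [|i y p _ IHy]; first by rewrite -polyC1 comp_polyC.
  by rewrite comp_polyM IHy comp_polyB comp_polyX comp_polyC.
by rewrite prodN !scalerA mulfK ?sign2 ?scale1r // pnatr_eq0 -lt0n fact_gt0.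
Qed.

Lemma dcompN (p : {poly R}) : (p \Po (- 'X))^`() = - (p^`() \Po (- 'X)).
Proof. by rewrite deriv_comp derivN derivX mulrN1. Qed.

Lemma stir_B n x :
  stirling1p n 2 x = (-1) ^+ n * n`!%:R / 2 * (conv L2c A n).[- x].
Proof.
rewrite /stirling1p stir_comp taylor2.
have H2 : (Rn n)^`N(2) = (2%:R)^-1 *: (Rn n)^`()^`().
  change ((Rn n)^`()^`()) with ((Rn n)^`(2)).
  by rewrite nderivn_def -[_ *+ 2`!]scaler_nat scalerA mulVf ?scale1r // pnatr_eq0.
rewrite H2 hornerZ Rn_A !derivZ dcompN derivN dcompN opprK hornerZ horner_comp.
rewrite deriv2_A hornerN hornerX.
ring.
Qed.


Lemma bimul_den (F : nat -> nat -> R) a b : bimul F denomc a b =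
  \sum_(i < a.+1) F i b * logc (a - i) - \sum_(j < b.+1) F a j * logc (b - j).
Proof.
rewrite /bimul /denomc.
under eq_bigr => i _ do under eq_bigr => j _ do rewrite mulrBr.
under eq_bigr => i _ do rewrite sumrB.
rewrite sumrB; congr (_ - _).
  apply: eq_bigr => i _; rewrite big_ord_recr /= subnn eqxx big1 ?add0r // => j _.
  by rewrite subn_eq0 leqNgt ltn_ord mulr0.
rewrite big_ord_recr /= subnn big1 ?add0r; last first.
  move=> i _; apply: big1 => j _.
  by rewrite subn_eq0 leqNgt ltn_ord mulr0.
by apply: eq_bigr => j _; rewrite eqxx.
Qed.

Lemma bimulD (F1 F2 : nat -> nat -> R) a b :
  bimul (fun a b => F1 a b + F2 a b) denomc a b = bimul F1 denomc a b + bimul F2 denomc a b.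
Proof.
rewrite /bimul -big_split; apply: eq_bigr => i _.
by rewrite -big_split; apply: eq_bigr => j _; rewrite mulrDl.
Qed.

Lemma bimulB (F1 F2 : nat -> nat -> R) a b :
  bimul (fun a b => F1 a b - F2 a b) denomc a b = bimul F1 denomc a b - bimul F2 denomc a b.
Proof.
rewrite /bimul -sumrB; apply: eq_bigr => i _.
by rewrite -sumrB; apply: eq_bigr => j _; rewrite mulrBl.
Qed.

Lemma logc0 : logc 0 = 0. Proof. by []. Qed.
Lemma logc1 : logc 1 = 1. Proof. by rewrite /logc /= expr2 mulrNN mulr1 invr1 mulr1. Qed.

Definition Gy (a b : nat) : R :=
  (if b == 1%N then logc a else 0) + (if a == 0%N then logc b.-1 else 0).

Lemma log2c_pred b : \sum_(j < b.+1) logc j.-1 * logc (b - j) = log2c b.-1.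
Proof.
case: b => [|b]; first by rewrite /log2c !big_ord1.
by rewrite big_ord_recl /= ?logc0 mul0r add0r.
Qed.

Lemma bimul_Gy a b : bimul Gy denomc a b =
  (if b == 1%N then log2c a else 0) - (if a == 0%N then log2c b.-1 else 0).
Proof.
rewrite bimul_den /Gy.
have -> : \sum_(i < a.+1) ((if b == 1%N then logc (i : nat) else 0) + (if (i : nat) == 0%N then logc b.-1 else 0)) * logc (a - i)
   = (if b == 1%N then log2c a else 0) + logc b.-1 * logc a.
  under eq_bigr => i _ do rewrite mulrDl.
  rewrite big_split /=; congr (_ + _).
    by case: (b == 1%N); last by rewrite big1 // => i _; rewrite mul0r.
  by rewrite big_ord_recl /= subn0 big1 ?addr0 // => i _; rewrite mul0r.
have -> : \sum_(j < b.+1) ((if (j : nat) == 1%N then logc a else 0) + (if a == 0%N then logc (j : nat).-1 else 0)) * logc (b - j)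
   = logc a * logc b.-1 + (if a == 0%N then log2c b.-1 else 0).
  under eq_bigr => i _ do rewrite mulrDl.
  rewrite big_split /=; congr (_ + _).
    case: b => [|b]; first by rewrite big_ord1 /= mul0r ?logc0 mulr0.
    rewrite big_ord_recl /= mul0r add0r big_ord_recl /= subn1 /=.
    by rewrite big1 ?addr0 // => i _; rewrite mul0r.
  case: (a == 0%N); last by rewrite big1 // => i _; rewrite mul0r.
  exact: log2c_pred.
by rewrite [logc a * _]mulrC; ring.
Qed.

Definition Hh (a b : nat) : R := - Iq (A a * B b).

Lemma IqN p : Iq (- p) = - Iq p.
Proof. by rewrite -scaleN1r IqZ mulN1r. Qed.

Lemma bimul_Hh a b : bimul Hh denomc a b =
  (A a * B b).[0] - (A a * B b).[1].
Proof.
rewrite bimul_den.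
have E1 : \sum_(i < a.+1) Hh i b * logc (a - i) = - Iq ((A a)^`() * B b).
  rewrite /Hh deriv_A /conv big_distrl /= Iq_sum -sumrN; apply: eq_bigr => i _.
  by rewrite -mulrA mulrCA /lc mul_polyC IqZ mulNr mulrC.
have E2 : \sum_(j < b.+1) Hh a j * logc (b - j) = Iq (A a * (B b)^`()).
  rewrite /Hh deriv_B mulrN IqN conv_comm /conv big_distrr /= Iq_sum -sumrN; apply: eq_bigr => i _.
  by rewrite mulrA [_ * lc _]mulrC /lc mul_polyC IqZ mulNr mulrC.
by rewrite E1 E2 -opprD -IqD -derivM Iq_deriv opprB.
Qed.

Definition Gg (a b : nat) : R := Gy a b + Hh a b.

Lemma Gg_gregory : is_gregory Gg.
Proof.
move=> a b; rewrite /Gg bimulD bimul_Gy bimul_Hh !hornerM A_at0 A_at1 B_at0 B_at1.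
rewrite /numerc.
case: a => [|[|a]] /=; rewrite ?mul1r ?mul0r; ring.
Qed.

Lemma gregory_uniq (D : nat -> nat -> R) :
  (forall a b, bimul D denomc a b = 0) -> forall a b, D a b = 0.
Proof.
move=> HD.
suff H : forall s a b, (a + b)%N = s -> D a b = 0 by move=> a b; exact: (H _ a b erefl).
elim/ltn_ind => s IHs a b.
elim/ltn_ind: b a => b IHb a Hs.
have E := HD a.+1 b; rewrite bimul_den in E.
rewrite big_ord_recr /= subnn logc0 mulr0 addr0 in E.
rewrite big_ord_recr /= subSn // subnn logc1 mulr1 in E.
rewrite big1 ?add0r in E; last first.
  move=> i _; rewrite (IHs (i + b)%N) ?mul0r //.
  by rewrite -Hs ltn_add2r.
rewrite big_ord_recr /= subnn logc0 mulr0 addr0 big1 ?subr0 in E => //.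
move=> j _.
have jb : (j < b)%N by [].
have : (a.+1 + j <= s)%N by rewrite -Hs addSn -addnS leq_add2l.
rewrite leq_eqVlt => /orP [/eqP e|lt].
  by rewrite (IHb j jb a.+1 e) mul0r.
by rewrite (IHs _ lt a.+1 j erefl) mul0r.
Qed.

Lemma Gg_formula m n : (1 <= m)%N -> (2 <= n)%N ->
    Gg m n = 2 * (-1) ^+ n.-1 / n`!%:R *
      \int[lebesgue_measure]_(t in `[0%R, 1%R])
         (gbinom t m * stirling1p n 2 (t - 1)).
Proof.
move=> m1 n2.
have -> : \int[lebesgue_measure]_(t in `[0%R, 1%R]) (gbinom t m * stirling1p n 2 (t - 1))
   = Iq (((-1) ^+ n * n`!%:R / 2) *: (A m * B n)).
  rewrite /Iq; apply: eq_Rintegral => t _.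
  rewrite hornerZ hornerM stir_B hornerA /gbinom /B horner_comp !hornerE opprB.
  rewrite /=; ring.
rewrite IqZ /Gg /Gy /Hh.
case: n n2 => [|[|n]] // _.
case: m m1 => [|m] // _ /=.
rewrite add0r.
have f0 : (n.+2`!%:R : R) != 0 by rewrite pnatr_eq0 -lt0n fact_gt0.
rewrite !exprS sub0r.
set I := Iq _; set s := (-1) ^+ n; set f := (n.+2)`!%:R.
have ss : s * s = 1 by exact: sign2.
transitivity (- (s * s) * I); first by rewrite ss mulN1r.
field.
exact: f0.
Qed.

End Alg.
Unset Implicit Arguments.

Theorem theorem5p3 (R : realType) :
  (exists G : nat -> nat -> R, is_gregory G) /\
  forall (G : nat -> nat -> R), is_gregory G ->
  forall m n : nat, (1 <= m)%N -> (2 <= n)%N ->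
    G m n = 2 * (-1) ^+ n.-1 / n`!%:R *
      \int[lebesgue_measure]_(t in `[0%R, 1%R])
         (gbinom t m * stirling1p n 2 (t - 1)).
Proof.
split; first by exists (@Gg R); exact: Gg_gregory.
move=> G HG m n m1 n2.
have HD := @gregory_uniq R (fun a b => G a b - @Gg R a b).
have -> : G m n = @Gg R m n.
  apply/eqP; rewrite -subr_eq0; apply/eqP; apply: HD => a b.
  by rewrite bimulB HG Gg_gregory subrr.
exact: Gg_formula.
Qed.
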